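(* Let $n\ge2$ and let $(V,\langle-,\ldots,-\rangle_n)$ be an infinite-dimensional non-degenerate alternating (resp. symmetric) $n$-linear space over a field $K$, and let $U$ be a finite-dimensional subspace of $V$. Then for any linearly independent $t_1,\ldots,t_m\in\lozenge^{n-1}V$ and any $k_1,\ldots,k_m\in K$ there is $w\in V$, linearly independent from $U$, such that $\langle t_i,w\rangle_2=k_i$ for all $i\le m$.
   Context: $\lozenge^{n-1}V$ is $\bigwedge^{n-1}V$ (alternating case) or $\bigvee^{n-1}V$ (symmetric case); $\langle-,-\rangle_2$ is the induced bilinear form on $(\lozenge^{n-1}V)\times V$ with $\langle\overline{v_1\otimes\cdots\otimes v_{n-1}},v\rangle_2=\langle v_1,\ldots,v_{n-1},v\rangle_n$ extended linearly. Non-degenerate: for every nonzero $t\in\lozenge^{n-1}V$ there is $w\in V$ with $\langle t,w\rangle_2\ne0$. *)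

(* Defs.v *)
From HB Require Import structures.
From mathcomp Require Import all_boot all_order all_fingroup all_algebra.
Set Implicit Arguments. Unset Strict Implicit. Unset Printing Implicit Defensive.
Import Order.TTheory GRing.Theory.
Local Open Scope ring_scope.

Section Defs.
Variables (K : fieldType) (V : lmodType K).

Definition upd (k : nat) (x : {ffun 'I_k -> V}) (i : 'I_k) (u : V)
  : {ffun 'I_k -> V} := [ffun j => if j == i then u else x j].

Definition multilinear_form (k : nat) (form : {ffun 'I_k -> V} -> K) : Prop :=
  forall (x : {ffun 'I_k -> V}) (i : 'I_k) (a : K) (u v : V),
    form (upd x i (a *: u + v)) = a * form (upd x i u) + form (upd x i v).

Definition alternating_form (k : nat) (form : {ffun 'I_k -> V} -> K) : Prop :=
  forall (x : {ffun 'I_k -> V}) (i j : 'I_k), i != j -> x i = x j -> form x = 0.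

Definition symmetric_form (k : nat) (form : {ffun 'I_k -> V} -> K) : Prop :=
  forall (x : {ffun 'I_k -> V}) (s : 'S_k), form [ffun j => x (s j)] = form x.

Definition nlinear_form (alt : bool) (k : nat) (form : {ffun 'I_k -> V} -> K) :=
  multilinear_form form /\ (if alt then alternating_form form else symmetric_form form).

(* Formal (finite) linear combinations of pure tensors v_1 (x) ... (x) v_k,
   i.e. elements of the free K-vector space on V^k, given by representatives. *)
Definition fsum (k : nat) := seq (K * {ffun 'I_k -> V}).

Definition fcoef (k : nat) (t : fsum k) (x : {ffun 'I_k -> V}) : K :=
  \sum_(p <- t) (if p.2 == x then p.1 else 0).

Definition fscale (k : nat) (c : K) (t : fsum k) : fsum k :=
  [seq (c * p.1, p.2) | p <- t].

Definition fcomb (k : nat) (gs : seq (K * fsum k)) : fsum k :=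
  flatten [seq fscale g.1 g.2 | g <- gs].

(* Generators of the relation subspace whose quotient is the exterior power
   (alt = true) resp. the symmetric_form power (alt = false) of V. *)
Definition is_relgen (alt : bool) (k : nat) (g : fsum k) : Prop :=
  (exists (x : {ffun 'I_k -> V}) (i : 'I_k) (a : K) (u v : V),
      g = [:: (1, upd x i (a *: u + v)); (- a, upd x i u); (-1, upd x i v)])
  \/ (alt /\ exists (x : {ffun 'I_k -> V}) (i j : 'I_k),
        i != j /\ x i = x j /\ g = [:: (1, x)])
  \/ (~~ alt /\ exists (x : {ffun 'I_k -> V}) (s : 'S_k),
        g = [:: (1, x); (-1, [ffun j => x (s j)])]).

(* t represents 0 in lozenge^k V: it lies in the span of the relations. *)
Definition lz_zero (alt : bool) (k : nat) (t : fsum k) : Prop :=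
  exists gs : seq (K * fsum k),
    (forall g, g \in [seq h.2 | h <- gs] -> is_relgen alt g) /\
    forall x, fcoef t x = fcoef (fcomb gs) x.

Definition lz_lin_indep (alt : bool) (k m : nat) (t : 'I_m -> fsum k) : Prop :=
  forall a : 'I_m -> K,
    lz_zero alt (fcomb [seq (a i, t i) | i <- enum 'I_m]) -> forall i, a i = 0.

Definition extend (n : nat) (x : {ffun 'I_n.-1 -> V}) (w : V) : {ffun 'I_n -> V} :=
  [ffun j : 'I_n => if (insub (val j) : option 'I_n.-1) is Some j' then x j' else w].

Definition pair2 (n : nat) (form : {ffun 'I_n -> V} -> K) (t : fsum n.-1) (w : V) : K :=
  \sum_(p <- t) p.1 * form (extend p.2 w).

Definition nondeg_nform (alt : bool) (n : nat) (form : {ffun 'I_n -> V} -> K) : Prop :=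
  forall t : fsum n.-1, ~ lz_zero alt t -> exists w : V, pair2 form t w != 0.

Definition in_span (s : seq V) (v : V) : Prop :=
  exists c : 'I_(size s) -> K, v = \sum_(i < size s) c i *: s`_i.

Definition infinite_dim : Prop := forall s : seq V, exists v : V, ~ in_span s v.

End Defs.

(* Main.v *)
Require Import Defs.
From HB Require Import structures.
From mathcomp Require Import all_boot all_order all_fingroup all_algebra.
From mathcomp Require Import ring zify.
From Stdlib Require Import Classical.
Import GRing.Theory.
Local Open Scope ring_scope.
Set Implicit Arguments. Unset Strict Implicit.

Section A.
Variables (K : fieldType) (V : lmodType K).

Lemma lastlt n (hn : (0 < n)%N) : (n.-1 < n)%N.
Proof. by rewrite prednK. Qed.

Lemma extend_upd (n : nat) (hn : (0 < n)%N) (x : {ffun 'I_n.-1 -> V}) (w : V) :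
  extend x w = upd (extend x 0) (Ordinal (@lastlt n hn)) w.
Proof.
set o := Ordinal _.
apply/ffunP => j; rewrite !ffunE.
case: insubP => [j' Hj Ej|Hj].
  have -> : (j == o) = false.
    apply/eqP => /(congr1 val) /= E.
    by move: Hj; change (\val j) with (nat_of_ord j); rewrite E ltnn.
  by [].
have -> : (j == o) = true.
  apply/eqP/val_inj => /=.
  have Hj' : ~~ (nat_of_ord j < n.-1)%N := Hj.
  move: (ltn_ord j) Hj'; clear -hn; lia.
by [].
Qed.

Lemma pair2_lin (n : nat) (hn : (0 < n)%N) (form : {ffun 'I_n -> V} -> K) :
  multilinear_form form -> forall t a u v,
  pair2 form t (a *: u + v) = a * pair2 form t u + pair2 form t v.
Proof.
move=> ml t a u v; rewrite /pair2 big_distrr -big_split /=.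
apply: eq_bigr => p _.
rewrite (extend_upd hn _ (a *: u + v)) (extend_upd hn _ u) (extend_upd hn _ v) ml; ring.
Qed.

Lemma pair2_fcomb (n : nat) (form : {ffun 'I_n -> V} -> K) (gs : seq (K * fsum V n.-1)) w :
  pair2 form (fcomb gs) w = \sum_(g <- gs) g.1 * pair2 form g.2 w.
Proof.
rewrite /pair2 /fcomb big_flatten big_map /=; apply: eq_bigr => g _.
rewrite /fscale big_map big_distrr /=; apply: eq_bigr => p _; ring.
Qed.
End A.
Section B.
Variables (K : fieldType) (V : lmodType K) (M : nat) (f : 'I_M -> V -> K).
Hypothesis flin : forall i a u v, f i (a *: u + v) = a * f i u + f i v.

Lemma f0 i : f i 0 = 0.
Proof.
have := flin i 1 0 0; rewrite scaler0 addr0 mul1r => H.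
by apply: (addrI (f i 0)); rewrite addr0 -H.
Qed.
Lemma fD i u v : f i (u + v) = f i u + f i v.
Proof. by have := flin i 1 u v; rewrite scale1r mul1r. Qed.
Lemma fZ i a u : f i (a *: u) = a * f i u.
Proof. by have := flin i a u 0; rewrite addr0 f0 addr0. Qed.
Lemma fB i u v : f i (u - v) = f i u - f i v.
Proof. by have := flin i (-1) v u; rewrite scaleN1r mulN1r addrC [_ + f i u]addrC. Qed.
Lemma f_sum i (I : Type) (r : seq I) (P : pred I) (c : I -> K) (vs : I -> V) :
  f i (\sum_(j <- r | P j) c j *: vs j) = \sum_(j <- r | P j) c j * f i (vs j).
Proof.
rewrite (big_morph (f i) (fD i) (f0 i)); apply: eq_bigr => j _; exact: fZ.
Qed.

Hypothesis indep : forall a : 'I_M -> K, (forall w, \sum_i a i * f i w = 0) -> forall i, a i = 0.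

Lemma dual (m : nat) : (m <= M)%N -> exists ws : 'I_M -> V,
  forall i j : 'I_M, (i < m)%N -> (j < m)%N -> f i (ws j) = (i == j)%:R.
Proof.
elim: m => [_|m IH Hm].
  by exists (fun=> 0) => i j.
have [ws Hws] := IH (ltnW Hm).
pose p : 'I_M := Ordinal Hm.
have split_lt : forall i : 'I_M, (i < m.+1)%N -> (i < m)%N \/ i = p.
  move=> i; rewrite ltnS leq_eqVlt => /orP [/eqP E|]; last by left.
  by right; apply: val_inj.
have pm : ~~ (p < m)%N by rewrite /= ltnn.
pose a (i : 'I_M) := if (i < m)%N then - f p (ws i) else (i == p)%:R.
have [v Hv] : exists v, \sum_i a i * f i v != 0.
  apply: NNPP => H.
  have H' : forall w, \sum_i a i * f i w = 0.
    move=> w; apply/eqP; apply: negbNE; apply/negP => Hw; apply: H; by exists w.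
  have := indep H' p; rewrite /a (negbTE pm) eqxx => /eqP; by rewrite oner_eq0.
have Ea : \sum_i a i * f i v = f p v - \sum_(i : 'I_M | (i < m)%N) f p (ws i) * f i v.
  rewrite (bigID (fun i : 'I_M => (i < m)%N)) /= addrC; congr (_ + _).
    rewrite (bigD1 p) //= big1 ?addr0.
      by rewrite /a (negbTE pm) eqxx mul1r.
    move=> i /andP [Hi Hip]; by rewrite /a (negbTE Hi) (negbTE Hip) mul0r.
  rewrite -sumrN; apply: eq_bigr => i Hi; by rewrite /a Hi mulNr.
pose u := v - \sum_(j : 'I_M | (j < m)%N) f j v *: ws j.
have fu : forall i : 'I_M, (i < m)%N -> f i u = 0.
  move=> i Hi; rewrite /u fB f_sum (bigD1 i) //= big1 ?addr0.
    by rewrite Hws // eqxx mulr1 subrr.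
  move=> j /andP [Hj Hji]; rewrite Hws // eq_sym (negbTE Hji); by rewrite mulr0.
have fpu : f p u = \sum_i a i * f i v.
  rewrite Ea /u fB f_sum; congr (_ - _); apply: eq_bigr => j _; by rewrite mulrC.
pose w' := (f p u)^-1 *: u.
have fw'p : f p w' = 1 by rewrite /w' fZ mulVf // fpu.
have fw' : forall i : 'I_M, (i < m)%N -> f i w' = 0.
  by move=> i Hi; rewrite /w' fZ (fu i) // mulr0.
exists (fun j => if j == p then w' else ws j - f p (ws j) *: w').
move=> i j Hi Hj.
case: (split_lt _ Hj) => [Hj'|->]; last first.
  rewrite eqxx; case: (split_lt _ Hi) => [Hi'|->]; last by rewrite fw'p eqxx.
  rewrite fw' //; have -> : (i == p) = false.
    by apply/negbTE; apply/negP => /eqP E; rewrite E in Hi'; rewrite Hi' in pm.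
  by [].
have -> : (j == p) = false.
  by apply/negbTE; apply/negP => /eqP E; rewrite E in Hj'; rewrite Hj' in pm.
rewrite fB fZ.
case: (split_lt _ Hi) => [Hi'|->].
  by rewrite fw' // mulr0 subr0 Hws.
rewrite fw'p mulr1 subrr; have -> : (p == j) = false.
  by apply/negbTE; apply/negP => /eqP E; rewrite -E in Hj'; rewrite Hj' in pm.
by [].
Qed.
End B.

Theorem lemma2p9 (K : fieldType) (V : lmodType K) (n : nat) (alt : bool)
    (form : {ffun 'I_n -> V} -> K) :
  (2 <= n)%N ->
  nlinear_form alt form ->
  nondeg_nform alt form ->
  infinite_dim V ->
  forall (us : seq V) (m : nat) (t : 'I_m -> fsum V n.-1) (k : 'I_m -> K),
    lz_lin_indep alt t ->
    exists w : V, ~ in_span us w /\ forall i : 'I_m, pair2 form (t i) w = k i.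
Proof.
move=> hn2 [ml _] nd infd us m t k li.
have hn : (0 < n)%N by apply: leq_trans hn2.
pose f i w := pair2 form (t i) w.
have flin : forall i a u v, f i (a *: u + v) = a * f i u + f i v.
  by move=> i a u v; rewrite /f (pair2_lin hn).
have indep : forall a : 'I_m -> K, (forall w, \sum_i a i * f i w = 0) -> forall i, a i = 0.
  move=> a Ha; apply: li; apply: NNPP => H.
  have [w /eqP Hw] := nd _ H; apply: Hw.
  rewrite pair2_fcomb big_map /= big_enum /=.
  rewrite -[RHS](Ha w); apply: eq_bigl => i; by rewrite inE.
have [ws Hws] := dual flin indep (leqnn m).
pose L := [seq ws j | j <- enum 'I_m].
have [v Hv] := infd (us ++ L).
pose e j := k j - f j v.
exists (v + \sum_j e j *: ws j); split; last first.
  move=> i; rewrite -/(f i _) fD // f_sum // (bigD1 i) //= big1 ?addr0.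
    by rewrite Hws // eqxx mulr1 /e addrC subrK.
  by move=> j Hji; rewrite Hws // eq_sym (negbTE Hji) mulr0.
move=> [c Hc]; apply: Hv.
pose cn (i : nat) := if (insub i : option 'I_(size us)) is Some i' then c i' else 0.
pose en (r : nat) := if (insub r : option 'I_m) is Some j then e j else 0.
pose dn (i : nat) := if (i < size us)%N then cn i else - en (i - size us)%N.
exists (fun i => dn i).
rewrite -(big_mkord xpredT (fun i => dn i *: (us ++ L)`_i)).
rewrite size_cat size_map size_enum_ord (@big_cat_nat _ _ _ (size us) 0 (size us + m)) ?leq_addr //=.
have -> : \sum_(0 <= i < size us) dn i *: (us ++ L)`_i = v + \sum_j e j *: ws j.
  rewrite Hc (eq_bigr (fun i : 'I_(size us) => cn i *: us`_i)); last first.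
    by move=> i _; rewrite /cn valK.
  rewrite -(big_mkord xpredT (fun i => cn i *: us`_i)); apply: eq_big_nat => i /andP [_ Hi].
  by rewrite /dn Hi nth_cat Hi.
have := big_addn 0 (size us + m) (size us) xpredT (fun i => dn i *: (us ++ L)`_i).
rewrite add0n addKn => ->.
have -> : \sum_(0 <= i < m) dn (i + size us) *: (us ++ L)`_(i + size us)
    = - \sum_j e j *: ws j.
  rewrite -sumrN (eq_bigr (fun j : 'I_m => - (en j *: L`_j))); last first.
    by move=> j _; rewrite /en valK /L (nth_map j) ?size_enum_ord // nth_ord_enum.
  rewrite -(big_mkord xpredT (fun j => - (en j *: L`_j))); apply: eq_big_nat => i /andP [_ Hi].
  by rewrite /dn ltnNge leq_addl /= nth_cat ltnNge leq_addl /= addnK scaleNr.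
by rewrite addrK.
Qed.
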